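(* Fix $1\le s\le d$ with $d/s$ an integer, and $T$ such that $T/2$, $Ts/(2d)$ and $T/(2s)$ are integers. Let $(f,O)\in\mathcal{O}_{\mathtt{blsp},s}$, so $f(x)=\|x-v\|_2^2$ for an $s$-block sparse $v$ and $O$ is built from a random $X\in\{-1,1\}^d$ with independent coordinates and $\mathbb{E}[X]=v$. Consider the following adaptive coordinate descent procedure using $T$ oracle queries, each of whose gradient estimates is observed only through one coordinate (i.e. through an oblivious sampling channel that deterministically selects a coordinate, chosen adaptively): Exploration phase (first $T/2$ queries): for each block $k\in[d/s]$, query the oracle $Ts/(2d)$ times and observe coordinate $(k-1)s+1$ of the gradient estimate, recovering from it the value $X_t((k-1)s+1)$ (possible since the query point is known); set $\hat X(k)$ to be the sum of these $Ts/(2d)$ recovered values. Let $k^*=\arg\max_{k\in[d/s]}|\hat X(k)|$ and $\mathcal{I}=\{(k^*-1)s+1,\dots,k^*s\}$. Exploitation phase (last $T/2$ queries): for each $j\in\mathcal{I}$, query the oracle $T/(2s)$ fresh times observing coordinate $j$, recover the values $X_t(j)$, and set $\hat Y(j)=\frac{2s}{T}\sum X_t(j)$ over these queries; set $\hat Y(j)=0$ for $j\notin\mathcal{I}$. Then the output $\hat Y=(\hat Y(1),\dots,\hat Y(d))$ satisfies \[ \mathbb{E}[f(\hat Y)]\ \le\ \frac{36\,d\ln\frac ds+2s^2}{T}. \]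
   Context: Partition $[d]$ into blocks $\{(k-1)s+1,\dots,ks\}$, $k\in[d/s]$. A vector $v\in\mathbb{R}^d$ is $s$-block sparse if it vanishes outside a single block and all coordinates in that block have the same absolute value, lying in $[0,1]$. $\mathcal{O}_{\mathtt{blsp},s}$ is the set of pairs $(f_v,O_v)$, $v$ $s$-block sparse, where $f_v(x)=\|x-v\|_2^2$ on $\mathcal{X}=[-1,1]^d$ and $O_v$, on query $x$ at time $t$, outputs $2(x-X_t)$, where $X_1,X_2,\dots$ are i.i.d. copies of a random vector $X\in\{-1,1\}^d$ with independent coordinates and $\mathbb{E}[X]=v$. *)

(* Defs.v *)
From HB Require Import structures.
From mathcomp Require Import all_boot all_order all_algebra.
From mathcomp Require Import reals exp.
Set Implicit Arguments. Unset Strict Implicit. Unset Printing Implicit Defensive.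
Import Order.TTheory GRing.Theory Num.Theory.
Local Open Scope ring_scope.

(* Dimension d = s * m, blocks are indexed by k : 'I_m (0-based); coordinate
   i : 'I_(s*m) lies in block i %/ s.  *)

Definition block_sparse {R : realType} (s m : nat) (v : 'I_(s * m) -> R) : Prop :=
  exists (k : 'I_m) (a : R), 0 <= a /\ a <= 1 /\
    forall i : 'I_(s * m),
      ((i %/ s)%N != k -> v i = 0) /\ ((i %/ s)%N == k -> `|v i| = a).

Definition fv {R : realType} (d : nat) (v : 'I_d -> R) (x : 'I_d -> R) : R :=
  \sum_(i < d) (x i - v i) ^+ 2.

(* Sample space of the T i.i.d. oracle samples X_1..X_T in {-1,1}^d,
   encoded as booleans (true <-> +1). *)
Definition Omega (T d : nat) := {ffun 'I_T -> {ffun 'I_d -> bool}}.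

(* Probability of an outcome: coordinates independent, sample t independent,
   P(X(i) = 1) = (1 + v i)/2, P(X(i) = -1) = (1 - v i)/2, so E[X] = v. *)
Definition prob {R : realType} (T d : nat) (v : 'I_d -> R) (w : Omega T d) : R :=
  \prod_(t < T) \prod_(i < d) (if w t i then (1 + v i) / 2 else (1 - v i) / 2).

(* X_t(i) as a real number (0-based t, i); 0 outside range (never used). *)
Definition Xv (R : realType) (T d : nat) (w : Omega T d) (t i : nat) : R :=
  match (insub t : option 'I_T), (insub i : option 'I_d) with
  | Some t', Some i' => if w t' i' then 1 else -1
  | _, _ => 0
  end.

(* Exploration: block k uses samples k*(T/(2m)) .. (k+1)*(T/(2m)) - 1
   (all within the first T/2), observing the first coordinate k*s of block k. *)
Definition Xhat (R : realType) (s m T : nat) (w : Omega T (s * m)) (k : 'I_m) : R :=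
  \sum_(r < T %/ (2 * m)) Xv R w (k * (T %/ (2 * m)) + r)%N (k * s)%N.

(* Exploitation: for j in block kst, use T/(2s) fresh samples (from the last
   T/2) observing coordinate j; Yhat j = (2s/T) * sum; Yhat j = 0 otherwise. *)
Definition Yhat (R : realType) (s m T : nat) (kst : 'I_m) (w : Omega T (s * m))
  (j : 'I_(s * m)) : R :=
  if (j %/ s)%N == kst then
    (2 * s)%:R / T%:R *
      \sum_(u < T %/ (2 * s)) Xv R w (T %/ 2 + (j %% s) * (T %/ (2 * s)) + u)%N j
  else 0.

Arguments block_sparse {R} s m v.
Arguments fv {R} d v x.
Arguments prob {R} T d v w.
Arguments Xhat R s m T w k : clear implicits.
Arguments Yhat R s m T kst w j : clear implicits.

(* Main.v *)
Require Import Defs.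
From HB Require Import structures.
From mathcomp Require Import all_boot all_order all_algebra.
From mathcomp Require Import reals exp.
From mathcomp Require Import sequences.
From mathcomp Require Import zify ring lra.
From Stdlib Require Import FunctionalExtensionality.
Import Order.TTheory GRing.Theory Num.Theory.
Local Open Scope ring_scope.


Definition pr {R : realType} (x : R) (b : bool) : R :=
  if b then (1 + x) / 2 else (1 - x) / 2.

Definition Ex {R : realType} {T d : nat} (v : 'I_d -> R) (F : Omega T d -> R) : R :=
  \sum_(w : Omega T d) prob T d v w * F w.

Arguments Ex {R T d} v F.

Lemma pr_sum {R : realType} (x : R) : pr x true + pr x false = 1.
Proof. rewrite /pr /= -mulrDl addrACA subrr addr0 divff //; apply: lt0r_neq0; lra. Qed.

Lemma E_prod {R : realType} {T d : nat} (v : 'I_d -> R) (g : 'I_T -> 'I_d -> bool -> R) :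
  Ex v (fun w => \prod_t \prod_i g t i (w t i)) =
  \prod_t \prod_i (pr (v i) true * g t i true + pr (v i) false * g t i false).
Proof.
rewrite /Ex /prob.
transitivity (\sum_(w : {ffun 'I_T -> {ffun 'I_d -> bool}})
   \prod_t \prod_i (pr (v i) (w t i) * g t i (w t i))).
  apply: eq_bigr => w _; rewrite -big_split /=; apply: eq_bigr => t _.
  by rewrite -big_split.
rewrite -(bigA_distr_bigA (fun t (x : {ffun 'I_d -> bool}) =>
   \prod_i (pr (v i) (x i) * g t i (x i)))).
apply: eq_bigr => t _.
rewrite -(bigA_distr_bigA (fun i b => pr (v i) b * g t i b)).
by apply: eq_bigr => i _; rewrite big_bool.
Qed.

Lemma Ex_add {R : realType} {T d : nat} (v : 'I_d -> R) (F G : Omega T d -> R) :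
  Ex v (fun w => F w + G w) = Ex v F + Ex v G.
Proof. by rewrite /Ex -big_split; apply: eq_bigr => w _; rewrite mulrDr. Qed.

Lemma Ex_scale {R : realType} {T d : nat} (v : 'I_d -> R) (c : R) (F : Omega T d -> R) :
  Ex v (fun w => c * F w) = c * Ex v F.
Proof. by rewrite /Ex mulr_sumr; apply: eq_bigr => w _; rewrite mulrCA. Qed.

Lemma Ex_const {R : realType} {T d : nat} (v : 'I_d -> R) (c : R) :
  Ex (T:=T) v (fun _ => c) = c.
Proof.
have H : Ex (T:=T) v (fun _ => 1) = 1.
  rewrite -[RHS](_ : \prod_(t < T) \prod_(i < d)
     (pr (v i) true * 1 + pr (v i) false * 1) = 1).
    rewrite -(E_prod v (fun _ _ _ => 1)) /Ex; apply: eq_bigr => w _; rewrite big1 // => t _.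
    by rewrite big1.
  by rewrite big1 // => t _; rewrite big1 // => i _; rewrite !mulr1 pr_sum.
by rewrite -[c in LHS]mulr1 Ex_scale H mulr1.
Qed.

Lemma Ex_sum {R : realType} {T d : nat} (v : 'I_d -> R) (I : finType) (P : pred I) (F : I -> Omega T d -> R) :
  Ex v (fun w => \sum_(i | P i) F i w) = \sum_(i | P i) Ex v (F i).
Proof.
rewrite /Ex exchange_big /=; apply: eq_bigr => w _; by rewrite mulr_sumr.
Qed.

Lemma prob_ge0 {R : realType} {T d : nat} (v : 'I_d -> R) w :
  (forall i, `|v i| <= 1) -> 0 <= prob T d v w.
Proof.
move=> hv; apply: prodr_ge0 => t _; apply: prodr_ge0 => i _.
have := hv i; rewrite ler_norml => /andP [h1 h2].
case: (w t i); apply: divr_ge0 => //; lra.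
Qed.

Lemma Ex_le {R : realType} {T d : nat} (v : 'I_d -> R) (F G : Omega T d -> R) :
  (forall i, `|v i| <= 1) -> (forall w, F w <= G w) -> Ex v F <= Ex v G.
Proof.
move=> hv h; apply: ler_sum => w _; apply: ler_wpM2l; [exact: prob_ge0 | exact: h].
Qed.


Definition Eg {R : realType} (x : R) (h : bool -> R) : R :=
  pr x true * h true + pr x false * h false.

Lemma Eg1 {R : realType} (x : R) : Eg x (fun _ => 1) = 1.
Proof. by rewrite /Eg !mulr1 pr_sum. Qed.

Lemma prod_if1 {R : realType} {I : finType} (j : I) (F : I -> R) :
  \prod_i (if i == j then F i else 1) = F j.
Proof.
by rewrite (bigD1 j) //= eqxx big1 ?mulr1 // => i /negbTE ->.
Qed.

Lemma E_single {R : realType} {T d : nat} (v : 'I_d -> R) (t : 'I_T) (i : 'I_d)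
   (h : bool -> R) :
  Ex v (fun w => h (w t i)) = Eg (v i) h.
Proof.
pose g t' i' b := if t' == t then (if i' == i then h b else 1) else 1.
have := E_prod v g.
have -> : Ex v (fun w : Omega T d => \prod_t0 \prod_i0 g t0 i0 (w t0 i0)) =
          Ex v (fun w => h (w t i)).
  apply: eq_bigr => w _; congr (_ * _).
  rewrite -[RHS](prod_if1 t (fun t' => h (w t' i))).
  apply: eq_bigr => t' _; rewrite /g; case: eqP => [->|_].
    by rewrite (prod_if1 i (fun i' => h (w t i'))).
  by rewrite big1.
move=> ->.
rewrite -[RHS](prod_if1 t (fun t' => Eg (v i) h)).
apply: eq_bigr => t' _; case: (eqVneq t' t) => [->|ne].
  rewrite -[RHS](prod_if1 i (fun i' => Eg (v i') h)); apply: eq_bigr => i' _.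
  rewrite /g eqxx; case: (eqVneq i' i) => [->|ne']; first by [].
  by rewrite !mulr1 pr_sum.
rewrite big1 // => i' _; rewrite /g (negbTE ne) !mulr1 pr_sum //.
Qed.

Definition mix {T d : nat} (A : pred 'I_T) (w w' : Omega T d) : Omega T d :=
  [ffun t => if A t then w t else w' t].

Lemma Ex_indep {R : realType} {T d : nat} (v : 'I_d -> R) {A : pred 'I_T}
   {F G : Omega T d -> R} :
  (forall w w' : Omega T d, (forall t, A t -> w t = w' t) -> F w = F w') ->
  (forall w w' : Omega T d, (forall t, ~~ A t -> w t = w' t) -> G w = G w') ->
  Ex v (fun w => F w * G w) = Ex v F * Ex v G.
Proof.
move=> hF hG.
rewrite -[LHS]mulr1 -(Ex_const (T:=T) v 1).
rewrite /Ex !mulr_suml; under eq_bigr do rewrite mulr_sumr.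
under [RHS]eq_bigr do rewrite mulr_sumr.
rewrite !pair_bigA /=.
pose phi (p : Omega T d * Omega T d) := (mix A p.1 p.2, mix A p.2 p.1).
have phiK : cancel phi phi.
  case=> w w'; rewrite /phi /mix /=; congr pair; apply/ffunP => t;
  by rewrite !ffunE; case: (A t).
rewrite (reindex_inj (can_inj phiK)) /=.
apply: eq_bigr => -[w w'] _ /=.
have hp : prob T d v (mix A w w') * prob T d v (mix A w' w) =
          prob T d v w * prob T d v w'.
  rewrite /prob -!big_split /=; apply: eq_bigr => t _.
  by rewrite /mix !ffunE; case: (A t) => //; rewrite mulrC.
have -> : F (mix A w w') = F w.
  by apply: hF => t At; rewrite /mix ffunE At.
have -> : G (mix A w w') = G w'.
  by apply: hG => t At; rewrite /mix ffunE (negbTE At).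
rewrite mulr1.
transitivity (prob T d v (mix A w w') * prob T d v (mix A w' w) * (F w * G w')).
  ring.
rewrite hp; ring.
Qed.


Lemma big_window {A : Type} {idx : A} (op : Monoid.law idx) (T a n : nat) (F : nat -> A) :
  (a + n <= T)%N ->
  \big[op/idx]_(r < n) F (a + r)%N = \big[op/idx]_(t < T | (a <= t < a + n)%N) F t.
Proof.
move=> h.
rewrite -(big_mkord (fun t => (a <= t < a + n)%N) F).
rewrite (big_cat_nat _ (n:=a)) //=; last by lia.
rewrite (big_cat_nat _ (m:=a) (n:=a+n)) //=; last by lia.
rewrite [X in op X _]big_nat_cond [X in op X _]big1; last first.
  move=> i /andP [/andP [_ ia] /andP [ai _]]; lia.
rewrite [X in op _ (op _ X)]big_nat_cond [X in op _ (op _ X)]big1; last first.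
  move=> i /andP [/andP [ai _] /andP [_ ia]]; lia.
rewrite Monoid.mul1m Monoid.mulm1.
rewrite big_nat_cond (eq_bigl (fun i => (a <= i < a + n)%N)); last first.
  by move=> i; rewrite andbb.
have E := @big_addn A idx op 0 (a+n) a (fun i => (a <= i < a+n)%N) F.
rewrite add0n in E; rewrite E addKn big_mkord.
apply: eq_big => [i|i _]; last by rewrite addnC.
by have hi := ltn_ord i; apply/esym/andP; split; lia.
Qed.

Lemma card_window (T a n : nat) : (a + n <= T)%N ->
  #|[pred t : 'I_T | (a <= t < a + n)%N]| = n.
Proof.
move=> h.
have := @big_window nat 0%N addn T a n (fun _ => 1%N) h.
rewrite sum1_card card_ord sum1_card => E.
by symmetry; rewrite {1}E; apply: eq_card.
Qed.


Definition sgn {R : realType} (b : bool) : R := if b then 1 else -1.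

Definition Xo {R : realType} {T d : nat} (w : Omega T d) (t : 'I_T) (i : 'I_d) : R :=
  sgn (w t i).

Lemma Ex_ext {R : realType} {T d : nat} (v : 'I_d -> R) {F : Omega T d -> R} (G : Omega T d -> R) :
  (forall w, F w = G w) -> Ex v F = Ex v G.
Proof. by move=> h; apply: eq_bigr => w _; rewrite h. Qed.

Lemma Ex_mgf {R : realType} {T d : nat} (v : 'I_d -> R) (P : pred 'I_T) (i : 'I_d)
   (h : bool -> R) :
  Ex v (fun w => \prod_(t | P t) h (w t i)) = Eg (v i) h ^+ #|P|.
Proof.
pose g t' i' b := if P t' then (if i' == i then h b else 1) else 1.
have := E_prod v g.
rewrite (Ex_ext v (fun w => \prod_(t | P t) h (w t i))); last first.
  move=> w; rewrite [RHS]big_mkcond /=; apply: eq_bigr => t' _; rewrite /g.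
  case: (P t'); last by rewrite big1.
  by rewrite (prod_if1 i (fun i' => h (w t' i'))).
move=> ->; rewrite -prodr_const [RHS]big_mkcond /=.
apply: eq_bigr => t' _; rewrite /g -[t' \in P]/(P t'); case: (P t').
  rewrite -[RHS](prod_if1 i (fun i' => Eg (v i') h)); apply: eq_bigr => i' _.
  case: (eqVneq i' i) => [->|ne']; first by [].
  by rewrite !mulr1 pr_sum.
by rewrite big1 // => i' _; rewrite !mulr1 pr_sum.
Qed.

Lemma Ex_var {R : realType} {T d : nat} (v : 'I_d -> R) (P : pred 'I_T) (i : 'I_d) :
  Ex v (fun w => (\sum_(t | P t) (Xo w t i - v i)) ^+ 2) = #|P|%:R * (1 - v i ^+ 2).
Proof.
rewrite (Ex_ext v (fun w => \sum_(t | P t) \sum_(t' | P t')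
     ((Xo w t i - v i) * (Xo w t' i - v i)))); last first.
  by move=> w; rewrite expr2 mulr_suml; apply: eq_bigr => t _; rewrite mulr_sumr.
rewrite Ex_sum.
rewrite -sum1_card natr_sum mulr_suml; apply: eq_bigr => t Pt.
rewrite Ex_sum (bigD1 t) //= big1 ?addr0.
  have E1 := E_single v t i (fun b => (sgn b - v i) * (sgn b - v i)).
  rewrite /= in E1; rewrite /Xo E1 /Eg /pr /sgn /=; by field.
move=> t' /andP [_ ne].
rewrite (@Ex_indep R T d v (pred1 t)
   (fun w => (fun b => sgn b - v i) (w t i))
   (fun w => (fun b => sgn b - v i) (w t' i))).
- have E1 := E_single v t i (fun b => sgn b - v i).
  rewrite /= in E1; rewrite E1 /Eg /pr /sgn /=.
  have -> : (1 + v i) / 2 * (1 - v i) + (1 - v i) / 2 * (-1 - v i) = 0 by field.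
  by rewrite mul0r.
- by move=> w w' h; rewrite (h t) //= eqxx.
- by move=> w w' h; rewrite (h t' ne).
Qed.


Lemma cosh_bound {R : realType} (l : R) : 0 <= l <= 2/5 ->
  (expR l + expR (- l)) / 2 <= 1 + 7/10 * l ^+ 2.
Proof.
move=> /andP [l0 l1].
set u := expR (l / 2); set z := expR (- (l / 2)).
have hu : 1 <= u by apply: le_trans _ (expR_ge1Dx _); rewrite lerDl divr_ge0.
have hz : 1 - l / 2 <= z by have := expR_ge1Dx (- (l / 2)); rewrite -/z.
have huz : u * z = 1 by rewrite /u /z expRN divff // gt_eqF // expR_gt0.
have el : expR l = u ^+ 2.
  by rewrite /u -expRM_natl; congr expR; field.
have eml : expR (- l) = z ^+ 2.
  by rewrite /z -expRM_natl; congr expR; field.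
have z0 : 0 < z by apply: expR_gt0.
have z1 : z <= 1.
  by rewrite /z expR_le1 oppr_le0 divr_ge0.
have hD1 : (u - z) * z <= 59/50 * l * z.
  have -> : (u - z) * z = 1 - z ^+ 2 by rewrite mulrBl huz expr2.
  nra.
have hD : u - z <= 59/50 * l.
  by rewrite -(ler_pM2r z0).
have hD0 : 0 <= u - z by rewrite subr_ge0; apply: le_trans z1 hu.
rewrite el eml.
have -> : u ^+ 2 + z ^+ 2 = (u - z) ^+ 2 + 2 by rewrite sqrrB huz; ring.
have : (u - z) ^+ 2 <= (59/50 * l) ^+ 2 by rewrite lerXn2r // nnegrE; nra.
nra.
Qed.

Lemma pow_le_expR {R : realType} (y : R) (n : nat) : 0 <= 1 + y ->
  (1 + y) ^+ n <= expR (n%:R * y).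
Proof.
move=> hy; rewrite expRM_natl; apply: lerXn2r; rewrite ?nnegrE //.
  exact: expR_ge0.
exact: expR_ge1Dx.
Qed.

Lemma ln2_ge {R : realType} : 3/5 <= ln (2 : R).
Proof.
have h1 : expR (3/20 : R) <= 20/17.
  have := expR_ge1Dx (- (3/20 : R)); rewrite expRN => h.
  have hp : 0 < expR (3/20 : R) by apply: expR_gt0.
  rewrite -(ler_pM2r hp) in h.
  rewrite mulVf ?gt_eqF // in h.
  nra.
have h2 : expR (3/5 : R) <= 2.
  have -> : (3/5 : R) = 4%:R * (3/20) by field.
  rewrite expRM_natl.
  apply: le_trans (_ : (20/17 : R) ^+ 4 <= 2).
    by apply: lerXn2r; rewrite ?nnegrE ?expR_ge0 //; lra.
  lra.
rewrite -[X in X <= _](expRK (3/5 : R)) ler_ln ?posrE ?expR_gt0 //; lra.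
Qed.

Lemma xexp_decr {R : realType} (c x0 x : R) : 0 < c -> 1 <= c * x0 -> x0 <= x ->
  x * expR (- (c * x)) <= x0 * expR (- (c * x0)).
Proof.
move=> c0 h1 h2.
have x00 : 0 < x0 by nra.
have e : expR (- (c * x0)) = expR (- (c * x)) * expR (c * (x - x0)).
  by rewrite -expRD; congr expR; ring.
rewrite e.
have := expR_ge1Dx (c * (x - x0)).
have := expR_gt0 (- (c * x)).
set E := expR (- (c * x)); set F := expR (c * (x - x0)).
move=> E0 hF.
have : x <= x0 * F by nra.
nra.
Qed.

Lemma final_real {R : realType} (m x : R) : 2 <= m -> 18 * ln m < x ->
  625/121 + 2 * (m - 1) * (x * expR (- (14/125 * x))) <= 18 * ln m.
Proof.
move=> m2 hx.
have m0 : 0 < m by lra.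
have hL : 3/5 <= ln m.
  apply: le_trans ln2_ge _; rewrite ler_ln ?posrE //; lra.
set L := ln m in hx hL *.
have B1 : x * expR (- (14/125 * x)) <= (18 * L) * expR (- (14/125 * (18 * L))).
  apply: xexp_decr; lra.
have B2 : expR (- (14/125 * (18 * L))) <= expR (- (2 * L)).
  rewrite ler_expR; lra.
have B3 : expR (- (2 * L)) = (m ^+ 2)^-1.
  by rewrite expRN expRM_natl /L lnK // posrE.
rewrite B3 in B2.
set M := (m ^+ 2)^-1 in B2.
have hM : M * m ^+ 2 = 1 by rewrite /M mulVf // expf_neq0 // gt_eqF.
have M0 : 0 <= M by rewrite /M invr_ge0 exprn_ge0 // ltW.
have B4 : (m - 1) * M <= 1/4.
  have : 4 * (m - 1) <= m ^+ 2 by nra.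
  nra.
have XE0 : 0 <= x * expR (- (14/125 * x)).
  apply: mulr_ge0; [lra | exact: expR_ge0].
have B5 : x * expR (- (14/125 * x)) <= 18 * L * M.
  apply: le_trans B1 _; apply: ler_wpM2l; lra.
have : (m - 1) * (x * expR (- (14/125 * x))) <= (m - 1) * (18 * L * M).
  apply: ler_wpM2l; lra.
nra.
Qed.


Lemma pw_ineq {R : realType} {m : nat} (k0 kst : 'I_m) (S : 'I_m -> R)
   (na nv0 B lam : R) :
  0 <= lam -> 0 < B -> `|nv0| = na -> `|S k0| <= `|S kst| ->
  (kst != k0)%:R <= (S k0 - nv0) ^+ 2 / B ^+ 2 +
    \sum_(k | k != k0) (expR (lam * (S k - (na - B))) + expR (lam * (- S k - (na - B)))).
Proof.
move=> l0 B0 hn hS.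
have Sge0 : 0 <= \sum_(k | k != k0)
    (expR (lam * (S k - (na - B))) + expR (lam * (- S k - (na - B)))).
  by apply: sumr_ge0 => k _; apply: addr_ge0; apply: expR_ge0.
have D0 : 0 <= (S k0 - nv0) ^+ 2 / B ^+ 2.
  by apply: divr_ge0; apply: sqr_ge0.
case: (eqVneq kst k0) => [_|ne] /=; first by rewrite addr_ge0.
case: (lerP B `|S k0 - nv0|) => hB.
  have : 1 <= (S k0 - nv0) ^+ 2 / B ^+ 2.
    rewrite ler_pdivlMr ?exprn_gt0 // mul1r.
    have := real_normK (num_real (S k0 - nv0)).
    have := normr_ge0 (S k0 - nv0); nra.
  lra.
have h1 : na - B < `|S kst|.
  apply: lt_le_trans hS.
  have h := lerB_dist nv0 (nv0 - S k0).
  have e : nv0 - (nv0 - S k0) = S k0 by ring.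
  rewrite e distrC hn in h; lra.
rewrite (bigD1 kst) //=.
have : 1 <= expR (lam * (S kst - (na - B))) + expR (lam * (- S kst - (na - B))).
  have e1 := expR_ge0 (lam * (S kst - (na - B))).
  have e2 := expR_ge0 (lam * (- S kst - (na - B))).
  case: (ler0P (S kst)) h1 => hs h1.
    have : 1 <= expR (lam * (- S kst - (na - B))).
      rewrite -[1]expR0 ler_expR; apply: mulr_ge0 => //; lra.
    lra.
  have : 1 <= expR (lam * (S kst - (na - B))).
    rewrite -[1]expR0 ler_expR; apply: mulr_ge0 => //; lra.
  lra.
have : 0 <= \sum_(k | (k != k0) && (k != kst))
    (expR (lam * (S k - (na - B))) + expR (lam * (- S k - (na - B)))).
  by apply: sumr_ge0 => k _; apply: addr_ge0; apply: expR_ge0.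
lra.
Qed.

Lemma mgf_bound {R : realType} {T d : nat} (v : 'I_d -> R) (Q : pred 'I_T) (i : 'I_d)
   (lam al e : R) :
  v i = 0 -> 0 <= lam <= 2/5 -> (e = 1 \/ e = -1) ->
  Ex v (fun w => expR (lam * (e * \sum_(t | Q t) Xo w t i - al)))
  <= expR (- (lam * al) + #|Q|%:R * (7/10 * lam ^+ 2)).
Proof.
move=> vi hl he.
rewrite (Ex_ext v (fun w => expR (- (lam * al)) *
   \prod_(t | Q t) (fun b => expR (lam * e * sgn b)) (w t i))); last first.
  move=> w; rewrite -expR_sum -expRD; congr expR.
  rewrite mulrBr addrC; congr (_ + _).
  by rewrite mulrA mulr_sumr.
have E1 := Ex_mgf v Q i (fun b => expR (lam * e * sgn b)); rewrite /= in E1.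
rewrite Ex_scale E1 expRD; apply: ler_wpM2l; first exact: expR_ge0.
have hc : Eg (v i) (fun b => expR (lam * e * sgn b)) <= 1 + 7/10 * lam ^+ 2.
  rewrite /Eg /pr /sgn vi /= subr0 addr0 !mulr1 mulrN1.
  case: he => ->; rewrite ?mulr1 ?mulrN1 ?opprK.
    by have := @cosh_bound _ lam hl; lra.
  by have := @cosh_bound _ lam hl; lra.
have h0 : 0 <= 1 + 7/10 * lam ^+ 2 by have := sqr_ge0 lam; lra.
apply: le_trans (pow_le_expR _ #|Q| h0).
apply: lerXn2r => //; rewrite nnegrE.
rewrite /Eg /pr; apply: addr_ge0; apply: mulr_ge0; rewrite ?expR_ge0 // vi; lra.
Qed.

Lemma sum_sub_const {R : realType} {I : finType} (Q : pred I) (F : I -> R) (c : R) :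
  \sum_(t | Q t) (F t - c) = \sum_(t | Q t) F t - #|Q|%:R * c.
Proof.
rewrite sumrB; congr (_ - _).
rewrite -sum1_card natr_sum mulr_suml.
by apply: eq_big => [t|t _]; rewrite ?mul1r.
Qed.

Lemma wrong_bound {R : realType} {T d m : nat} (v : 'I_d -> R) (P : 'I_m -> pred 'I_T)
  (c : 'I_m -> 'I_d) (n : nat) (k0 : 'I_m) (a : R) (sel : ('I_m -> R) -> 'I_m) :
  (forall i, `|v i| <= 1) -> (0 < n)%N -> (forall k, #|P k| = n) ->
  (forall k, k != k0 -> v (c k) = 0) -> `|v (c k0)| = a -> 0 <= a -> a <= 1 ->
  (forall (h : 'I_m -> R) k, `|h k| <= `|h (sel h)|) ->
  a ^+ 2 * Ex v (fun w => (sel (fun k => \sum_(t | P k t) Xo w t (c k)) != k0)%:R)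
   <= 18 * ln (m%:R : R) / n%:R.
Proof.
move=> hv n0 hP hc0 ha a0 a1 hsel.
pose S := fun (w : Omega T d) (k : 'I_m) => \sum_(t | P k t) (Xo w t (c k) : R).
set pw := Ex v _.
have pw0 : 0 <= pw.
  by rewrite -[X in X <= _](Ex_const (T:=T) v 0); apply: Ex_le => // w; apply: ler0n.
have pw1 : pw <= 1.
  by rewrite -[X in _ <= X](Ex_const (T:=T) v 1); apply: Ex_le => // w; case: (_ != _).
have m0 : (0 < m)%N by have := ltn_ord k0; lia.
have n0R : 0 < n%:R :> R by rewrite ltr0n.
have L0 : 0 <= ln (m%:R : R) by apply: ln_ge0; rewrite ler1n.
case: (leqP m 1) => hm.
  have -> : pw = 0.
    rewrite /pw; transitivity (Ex (T:=T) v (fun _ => 0)); last exact: Ex_const.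
    apply: Ex_ext => w.
    case: eqP => // ne; exfalso; apply: ne.
    apply/ord_inj; set j := sel _; have := ltn_ord j; have := ltn_ord k0; lia.
  rewrite mulr0; apply: divr_ge0 => //; apply: mulr_ge0 => //.
have m2 : (2 : R) <= m%:R by rewrite (ler_nat R 2 m).
set x := n%:R * a ^+ 2.
have x0 : 0 <= x by apply: mulr_ge0; [apply: ltW | apply: sqr_ge0].
suff hx : x * pw <= 18 * ln (m%:R : R).
  rewrite ler_pdivlMr //; apply: le_trans hx; rewrite le_eqVlt; apply/orP; left.
  by apply/eqP; rewrite /x; ring.
case: (lerP x (18 * ln (m%:R : R))) => hx.
  apply: le_trans hx; rewrite -[X in _ <= X]mulr1; exact: ler_wpM2l.
have apos : 0 < a.
  rewrite lt0r a0 andbT; apply/eqP => ea; move: hx; rewrite /x ea expr0n /= mulr0.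
  lra.
set lam := 2/5 * a.
set na := n%:R * a.
set B := 11/25 * na.
have B0 : 0 < B by rewrite /B /na; apply: mulr_gt0; [lra | exact: mulr_gt0].
have key : pw <= Ex v (fun w => (S w k0 - n%:R * v (c k0)) ^+ 2 / B ^+ 2 +
    \sum_(k | k != k0) (expR (lam * (S w k - (na - B))) +
                        expR (lam * (- S w k - (na - B))))).
  apply: Ex_le => // w; apply: pw_ineq.
  - by rewrite /lam; apply: mulr_ge0 => //; lra.
  - exact: B0.
  - by rewrite normrM normr_nat ha.
  - exact: hsel.
rewrite Ex_add Ex_sum in key.
have hl : 0 <= lam <= 2/5 by rewrite /lam; apply/andP; split; nra.
have T1 : Ex v (fun w => (S w k0 - n%:R * v (c k0)) ^+ 2 / B ^+ 2) <= n%:R / B ^+ 2.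
  rewrite (Ex_ext v (fun w => (B ^+ 2)^-1 *
     (\sum_(t | P k0 t) (Xo w t (c k0) - v (c k0))) ^+ 2)); last first.
    by move=> w; rewrite sum_sub_const hP mulrC.
  rewrite Ex_scale Ex_var hP mulrC; apply: ler_wpM2r.
    by rewrite invr_ge0; apply: sqr_ge0.
  have := sqr_ge0 (v (c k0)); have := ltW n0R; nra.
have eE : expR (- (lam * (na - B)) + n%:R * (7/10 * lam ^+ 2)) =
          expR (- (14/125 * x)).
  by congr expR; rewrite /lam /B /na /x; field.
have T2 : forall k, k != k0 ->
    Ex v (fun w => expR (lam * (S w k - (na - B)))) <= expR (- (14/125 * x)).
  move=> k ne; rewrite -eE -(hP k).
  rewrite (Ex_ext v (fun w => expR (lam * (1 * \sum_(t | P k t) Xo w t (c k) - (na - B)))));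
    last by move=> w; rewrite mul1r.
  exact: (mgf_bound v (P k) (c k) lam (na - B) 1 (hc0 k ne) hl (or_introl erefl)).
have T3 : forall k, k != k0 ->
    Ex v (fun w => expR (lam * (- S w k - (na - B)))) <= expR (- (14/125 * x)).
  move=> k ne; rewrite -eE -(hP k).
  rewrite (Ex_ext v (fun w => expR (lam * (-1 * \sum_(t | P k t) Xo w t (c k) - (na - B)))));
    last by move=> w; rewrite mulN1r.
  exact: (mgf_bound v (P k) (c k) lam (na - B) (-1) (hc0 k ne) hl (or_intror erefl)).
have T4 : \sum_(k | k != k0) Ex v (fun w => expR (lam * (S w k - (na - B))) +
                              expR (lam * (- S w k - (na - B))))
          <= (m%:R - 1) * (2 * expR (- (14/125 * x))).
  apply: le_trans (_ : \sum_(k | k != k0) (2 * expR (- (14/125 * x))) <= _).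
    apply: ler_sum => k ne; rewrite Ex_add; have := T2 k ne; have := T3 k ne; lra.
  have em : (m.-1%:R : R) = m%:R - 1 by rewrite -[in RHS](prednK m0) -natr1 addrK.
  by rewrite sumr_const cardC1 card_ord -(mulr_natl (2 * expR _) m.-1) em.
have pwb : pw <= n%:R / B ^+ 2 + (m%:R - 1) * (2 * expR (- (14/125 * x))).
  by apply: le_trans key _; apply: lerD.
have xB : x * (n%:R / B ^+ 2) = 625/121.
  rewrite /x /B /na; field; apply/andP; split; apply: lt0r_neq0 => //.
have fr := @final_real R _ _ m2 hx.
have xE0 : 0 <= x * expR (- (14/125 * x)) by apply: mulr_ge0 => //; apply: expR_ge0.
apply: le_trans fr.
apply: le_trans (_ : x * (n%:R / B ^+ 2 + (m%:R - 1) * (2 * expR (- (14/125 * x)))) <= _).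
  exact: ler_wpM2l.
rewrite mulrDr xB; apply: lerD => //.
rewrite le_eqVlt; apply/orP; left; apply/eqP; ring.
Qed.


Lemma divn_window (s j k : nat) : (0 < s)%N ->
  (j %/ s == k)%N = (k * s <= j < k * s + s)%N.
Proof.
move=> s0; rewrite eqn_leq leq_divRL // -ltnS ltn_divLR // mulSn.
by rewrite andbC addnC.
Qed.

Lemma sum_if_const {R : realType} {I : finType} (P : pred I) (c : R) :
  \sum_i (if P i then c else 0) = #|P|%:R * c.
Proof. by rewrite -big_mkcond /= sumr_const mulr_natl. Qed.

Lemma sum_ind {R : realType} {m : nat} (j : 'I_m) (F : 'I_m -> R) :
  \sum_k (j == k)%:R * F k = F j.
Proof.
rewrite (bigD1 j) //= eqxx mul1r big1 ?addr0 // => k ne.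
by rewrite eq_sym (negbTE ne) mul0r.
Qed.

Lemma XvE {R : realType} {T d : nat} (w : Omega T d) (t : 'I_T) (i : 'I_d) :
  Xv R w t i = Xo w t i.
Proof. by rewrite /Xv !valK. Qed.

Lemma Xv_agree {R : realType} {T d : nat} (w w' : Omega T d) (b tt i : nat) :
  (forall t : 'I_T, (t < b)%N -> w t = w' t) -> (tt < b)%N ->
  Xv R w tt i = Xv R w' tt i.
Proof.
move=> h hb; rewrite /Xv; case: insubP => [t' _ et|//].
by rewrite h // et.
Qed.

Theorem theorem13 (R : realType) (s m T : nat) (v : 'I_(s * m) -> R)
    (sel : ('I_m -> R) -> 'I_m) :
  (0 < s)%N -> (0 < m)%N -> (0 < T)%N ->
  (2 %| T)%N -> (2 * m %| T)%N -> (2 * s %| T)%N ->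
  block_sparse s m v ->
  (forall (h : 'I_m -> R) (k : 'I_m), `|h k| <= `|h (sel h)|) ->
  \sum_(w : Omega T (s * m))
     prob T (s * m) v w *
       fv (s * m) v (Yhat R s m T (sel (Xhat R s m T w)) w)
  <= (36 * (s * m)%:R * ln (m%:R : R) + 2 * (s%:R) ^+ 2) / T%:R.
Proof.
move=> s0 m0 T0 h2 h2m h2s [k0 [a [a0 [a1 hva]]]] hsel.
have hv1 : forall i, `|v i| <= 1.
  move=> i; have [h1 h2'] := hva i; case: (eqVneq (i %/ s)%N k0) => e.
    by rewrite h2' ?e ?eqxx.
  by rewrite h1 ?e // normr0.
set n := (T %/ (2 * m))%N.
set n' := (T %/ (2 * s))%N.
have hTn : T = (n * (2 * m))%N by rewrite /n divnK.
have hTn' : T = (n' * (2 * s))%N by rewrite /n' divnK.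
have hT2 : (T %/ 2 = n * m)%N by rewrite {1}hTn mulnCA mulKn.
have hT2' : (T %/ 2 = n' * s)%N by rewrite {1}hTn' mulnCA mulKn.
have n0 : (0 < n)%N by move: T0; rewrite hTn; case: (n) => //.
have n0' : (0 < n')%N by move: T0; rewrite hTn'; case: (n') => //.
have ci_lt : forall k : 'I_m, (k * s < s * m)%N.
  by move=> k; have := ltn_ord k; nia.
pose ci k := Ordinal (ci_lt k).
pose P (k : 'I_m) := [pred t : 'I_T | (k * n <= t < k * n + n)%N].
pose Q (j : 'I_(s * m)) :=
  [pred t : 'I_T | (T %/ 2 + j %% s * n' <= t < T %/ 2 + j %% s * n' + n')%N].
pose c := (2 * s)%:R / T%:R : R.
pose Y (w : Omega T (s * m)) (j : 'I_(s * m)) := c * \sum_(t | Q j t) (Xo w t j : R).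
pose G (k : 'I_m) (w : Omega T (s * m)) :=
  \sum_(j : 'I_(s * m)) (if (j %/ s == k)%N then (Y w j - v j) ^+ 2 else v j ^+ 2).
have XhatE : forall w, Xhat R s m T w = (fun k => \sum_(t | P k t) Xo w t (ci k)).
  move=> w; apply: functional_extensionality => k.
  rewrite /Xhat -/n (@big_window R 0 +%R T (k * n) n (fun t => Xv R w t (k * s))).
    by apply: eq_bigr => t _; rewrite -[(k * s)%N]/(nat_of_ord (ci k)) XvE.
  by have := ltn_ord k; nia.
have YhatE : forall (k : 'I_m) (w : Omega T (s * m)) (j : 'I_(s * m)), Yhat R s m T k w j = if (j %/ s == k)%N then Y w j else 0.
  move=> k w j; rewrite /Yhat -/n'; case: ifP => // _; rewrite /Y /c.
  congr (_ * _).
  rewrite (@big_window R 0 +%R T (T %/ 2 + j %% s * n') n' (fun t => Xv R w t j)).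
    by apply: eq_bigr => t _; rewrite XvE.
  by have := ltn_pmod j s0; nia.
have fvE : forall (k : 'I_m) (w : Omega T (s * m)), fv (s * m) v (Yhat R s m T k w) = G k w.
  move=> k w; rewrite /fv /G; apply: eq_bigr => j _; rewrite YhatE.
  by case: ifP => // _; rewrite sub0r sqrrN.
have cn' : c * n'%:R = 1.
  rewrite /c hTn' natrM mulnC natrM; field.
  by apply/andP; split; rewrite pnatr_eq0 -lt0n; [exact: n0' | exact: s0].
have c0 : 0 <= c by rewrite /c divr_ge0.
have cardQ : forall j : 'I_(s * m), #|Q j| = n'.
  move=> j; apply: card_window; have := ltn_pmod j s0; nia.
have cardB : forall k : 'I_m, #|(fun j : 'I_(s * m) => (j %/ s == k)%N)| = s.
  move=> k; transitivity #|[pred t : 'I_(s * m) | (k * s <= t < k * s + s)%N]|.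
    by apply: eq_card => j; rewrite !unfold_in /= divn_window.
  by apply: card_window; have := ltn_ord k; nia.
have EY : forall j, Ex v (fun w => (Y w j - v j) ^+ 2) = c * (1 - v j ^+ 2).
  move=> j.
  rewrite (Ex_ext v (fun w => c ^+ 2 * (\sum_(t | Q j t) (Xo w t j - v j)) ^+ 2)).
    rewrite Ex_scale Ex_var cardQ.
    by transitivity (c * (c * n'%:R) * (1 - v j ^+ 2)); [ring | rewrite cn' mulr1].
  by move=> w; rewrite sum_sub_const cardQ /Y -exprMn mulrBr mulrA cn' mul1r.
have EG : forall k, Ex v (G k) <= c * s%:R + (k != k0)%:R * (s%:R * a ^+ 2).
  move=> k; rewrite /G Ex_sum.
  apply: le_trans (_ : \sum_(j : 'I_(s * m)) ((if (j %/ s == k)%N then c else 0) +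
       (if (j %/ s == k0)%N then (k != k0)%:R * a ^+ 2 else 0)) <= _).
    apply: ler_sum => j _.
    case: ifP => hj.
      rewrite EY; have := sqr_ge0 (v j).
      have : 0 <= (if (j %/ s == k0)%N then (k != k0)%:R * a ^+ 2 else 0).
        by case: ifP => // _; apply: mulr_ge0 => //; apply: sqr_ge0.
      nra.
    rewrite Ex_const add0r.
    have [hv0 hva'] := hva j.
    case: ifP => hj0.
      have -> : k != k0 by apply/eqP => ek; move: hj; rewrite ek hj0.
      by rewrite mul1r -(hva' hj0) real_normK ?num_real.
    by rewrite hv0 ?hj0 // expr0n.
  rewrite big_split /= !sum_if_const !cardB.
  by rewrite [X in X <= _](_ : _ = c * s%:R + (k != k0)%:R * (s%:R * a ^+ 2)) //; ring.
have hX : forall w w' : Omega T (s * m),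
    (forall t : 'I_T, (t < T %/ 2)%N -> w t = w' t) ->
    Xhat R s m T w = Xhat R s m T w'.
  move=> w w' h; apply: functional_extensionality => k; rewrite /Xhat.
  apply: eq_bigr => r _; apply: (Xv_agree w w' (T %/ 2) _ _ h); rewrite -/n hT2.
  have hr : (r < n)%N := ltn_ord r; have hk := ltn_ord k; move: hr hk.
  move: (nat_of_ord r) (nat_of_ord k) => r1 k1 hr hk; clear -hr hk; nia.
have hYw : forall w w' : Omega T (s * m),
    (forall t : 'I_T, ~~ (t < T %/ 2)%N -> w t = w' t) -> forall j, Y w j = Y w' j.
  move=> w w' h j; rewrite /Y; congr (_ * _); apply: eq_bigr => t /andP [ht _].
  by rewrite /Xo h // -leqNgt; apply: leq_trans ht; apply: leq_addr.
pose kst := fun w => sel (Xhat R s m T w).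
have step1 : \sum_(w : Omega T (s * m))
     prob T (s * m) v w * fv (s * m) v (Yhat R s m T (sel (Xhat R s m T w)) w) =
   \sum_k Ex v (fun w => (kst w == k)%:R) * Ex v (G k).
  transitivity (Ex v (fun w => \sum_k (kst w == k)%:R * G k w)).
    by apply: eq_bigr => w _; rewrite fvE (sum_ind _ (fun k => G k w)).
  rewrite Ex_sum; apply: eq_bigr => k _.
  apply: (@Ex_indep R T (s * m) v (fun t : 'I_T => (t < T %/ 2)%N)
            (fun w => (kst w == k)%:R) (G k)).
  - by move=> w w' h; rewrite /kst (hX w w' h).
  - by move=> w w' h; rewrite /G; apply: eq_bigr => j _; rewrite (hYw w w' h).
rewrite step1.
pose C (k : 'I_m) := c * s%:R + (k != k0)%:R * (s%:R * a ^+ 2).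
apply: le_trans (_ : \sum_k Ex v (fun w => (kst w == k)%:R) * C k <= _).
  apply: ler_sum => k _; apply: ler_wpM2l; last exact: EG.
  by rewrite -[X in X <= _](Ex_const (T:=T) v 0); apply: Ex_le => // w; apply: ler0n.
pose pw := Ex v (fun w => (kst w != k0)%:R).
have step2 : \sum_k Ex v (fun w => (kst w == k)%:R) * C k =
             c * s%:R + (s%:R * a ^+ 2) * pw.
  transitivity (Ex v (fun w => \sum_k (kst w == k)%:R * C k)).
    rewrite Ex_sum; apply: eq_bigr => k _; rewrite mulrC -Ex_scale.
    by apply: Ex_ext => w; rewrite mulrC.
  rewrite (Ex_ext v (fun w => c * s%:R + (s%:R * a ^+ 2) * (kst w != k0)%:R)).
    by rewrite Ex_add Ex_const Ex_scale.
  by move=> w; rewrite (sum_ind _ C) /C; ring.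
rewrite step2.
have hPc : forall k : 'I_m, #|P k| = n.
  move=> k; apply: card_window; rewrite hTn.
  have hk := ltn_ord k; move: (nat_of_ord k) hk => k1 hk; clear -hk; nia.
have hdiv : forall k : 'I_m, ((ci k) %/ s)%N = k.
  by move=> k; rewrite /= mulnK.
have hc0 : forall k, k != k0 -> v (ci k) = 0.
  by move=> k ne; apply: (hva (ci k)).1; rewrite hdiv.
have ha : `|v (ci k0)| = a by apply: (hva (ci k0)).2; rewrite hdiv.
have wb := wrong_bound v P ci n k0 a sel hv1 n0 hPc hc0 ha a0 a1 hsel.
have epw : pw = Ex v (fun w =>
     (sel (fun k => \sum_(t | P k t) Xo w t (ci k)) != k0)%:R).
  by apply: Ex_ext => w; rewrite /kst XhatE.
rewrite -epw in wb.
have eR : (36 * (s * m)%:R * ln (m%:R : R) + 2 * (s%:R) ^+ 2) / T%:R =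
          c * s%:R + s%:R * (18 * ln (m%:R : R) / n%:R).
  have eT : (T%:R : R) = n%:R * (2 * m%:R) by rewrite {1}hTn natrM natrM.
  rewrite /c eT natrM natrM.
  field.
  by apply/andP; split; rewrite pnatr_eq0 -lt0n; [exact: n0 | exact: m0].
rewrite eR; apply: lerD => //.
rewrite -mulrA; apply: ler_wpM2l => //.
Qed.
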